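(* Let $f_1,f_2$ be strongly hyperbolic functions, $a_1,a_2>0$, $b_1,b_2,c_1,c_2\in\mathbb{R}$, and let $D_1=\overline{f_{a_1,b_1,c_1}}$, $D_2=\overline{f_{a_2,b_2,c_2}}$ be distinct with $D_1\cap D_2=\{p\}$. (1) If $p=(b,\infty)$ with $b\in\mathbb{R}$, then $a_1=a_2$, $b_1=b_2=-b$ and $c_1\neq c_2$. (2) If $p=(\infty,c)$ with $c\in\mathbb{R}$, then $a_1=a_2$, $b_1\neq b_2$ and $c_1=c_2=c$. (3) If $p=(x_p,y_p)\in\mathbb{R}^2$, then $f'_{a_1,b_1,c_1}(x_p)=f'_{a_2,b_2,c_2}(x_p)$.
   Context: Identify $\mathbb{S}^1$ with $\mathbb{R}\cup\{\infty\}$, $\mathcal{P}=\mathbb{S}^1\times\mathbb{S}^1$, $\mathbb{R}^+=(0,\infty)$. A function $f:\mathbb{R}^+\to\mathbb{R}^+$ is strongly hyperbolic if: (1) $\lim_{x\to0+}f(x)=+\infty$, $\lim_{x\to+\infty}f(x)=0$; (2) $f$ strictly convex; (3) $\lim_{x\to+\infty}f(x+b)/f(x)=1$ for each $b\in\mathbb{R}$; (4) $f$ differentiable; (5) $\ln|f'|$ strictly convex. For $a>0$, $b,c\in\mathbb{R}$: $f_{a,b,c}:\mathbb{R}\setminus\{-b\}\to\mathbb{R}$, $f_{a,b,c}(x)=af_1(x+b)+c$ for $x>-b$, $f_{a,b,c}(x)=-af_2(-x-b)+c$ for $x<-b$; $\overline{f_{a,b,c}}=\{(x,f_{a,b,c}(x)):x\ne-b\}\cup\{(-b,\infty),(\infty,c)\}\subset\mathcal{P}$.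 *)

(* Defs.v *)
From Stdlib Require Import Reals.
From Coquelicot Require Import Coquelicot.
Open Scope R_scope.

(* S^1 = R ∪ {∞}: [Some x] is the real x, [None] is ∞. *)
Definition S1 := option R.
Definition P := (S1 * S1)%type.

Definition strictly_convex_pos (g : R -> R) : Prop :=
  forall x y t, 0 < x -> 0 < y -> x <> y -> 0 < t < 1 ->
    g (t * x + (1 - t) * y) < t * g x + (1 - t) * g y.

(* f : R^+ -> R^+ is represented by f : R -> R, only its values on (0,∞) matter. *)
Definition strongly_hyperbolic (f : R -> R) : Prop :=
  (forall x, 0 < x -> 0 < f x) /\
  filterlim f (at_right 0) (Rbar_locally p_infty) /\
  is_lim f p_infty 0 /\
  strictly_convex_pos f /\
  (forall b : R, is_lim (fun x => f (x + b) / f x) p_infty 1) /\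
  (forall x, 0 < x -> ex_derive f x) /\
  strictly_convex_pos (fun x => ln (Rabs (Derive f x))).

(* f_{a,b,c}; the value at x = -b is irrelevant (not in the domain). *)
Definition fabc (f1 f2 : R -> R) (a b c : R) (x : R) : R :=
  if Rlt_dec (- b) x then a * f1 (x + b) + c else - a * f2 (- x - b) + c.

Definition fabc_bar (f1 f2 : R -> R) (a b c : R) (q : P) : Prop :=
  (exists x, x <> - b /\ q = (Some x, Some (fabc f1 f2 a b c x))) \/
  q = (Some (- b), None) \/
  q = (None, Some c).

(* Main.v *)
Require Import Defs.
From Stdlib Require Import Reals Lra.
From Coquelicot Require Import Coquelicot.
Open Scope R_scope.

Lemma ivt0 (h : R -> R) (a b : R) : a < b ->
  (forall x, a <= x <= b -> continuous h x) ->
  (h a < 0 < h b \/ h b < 0 < h a) -> exists z, a < z < b /\ h z = 0.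
Proof.
intros Hab Hc [[H1 H2]|[H1 H2]].
- destruct (Ranalysis5.IVT_interv h a b) as [z [Hz1 Hz2]]; auto.
  + intros y Hy; apply continuity_pt_filterlim; apply Hc; auto.
  + exists z; split; auto. destruct Hz1 as [Hz1 Hz3]; split.
    * destruct Hz1 as [|E]; auto; subst; lra.
    * destruct Hz3 as [|E]; auto; subst; lra.
- destruct (Ranalysis5.IVT_interv (fun x => - h x) a b) as [z [Hz1 Hz2]]; auto.
  + intros y Hy. apply continuity_pt_opp. apply continuity_pt_filterlim; apply Hc; auto.
  + lra.
  + lra.
  + exists z; split; [|lra]. destruct Hz1 as [Hz1 Hz3]; split.
    * destruct Hz1 as [|E]; auto; subst; lra.
    * destruct Hz3 as [|E]; auto; subst; lra.
Qed.

Lemma sign_const (h : R -> R) (P : R -> Prop) (xp : R) :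
  (forall x y z, P x -> P z -> x <= y <= z -> P y) ->
  (forall x, P x -> continuous h x) ->
  (forall y, P y -> exists y1 y2, P y1 /\ P y2 /\ y1 < y < y2 /\ h y1 < 0 /\ h y2 < 0) ->
  (forall x, P x -> h x = 0 -> x = xp) ->
  forall y, P y -> h y <= 0.
Proof.
intros Hconv Hc Hend Hu y Py.
destruct (Rle_lt_dec (h y) 0) as [|Hpos]; auto.
destruct (Hend y Py) as [y1 [y2 [P1 [P2 [[L1 L2] [N1 N2]]]]]].
destruct (ivt0 h y1 y) as [z1 [[Z1 Z1'] E1]]; auto.
{ intros x Hx; apply Hc; apply (Hconv y1 x y); auto. }
destruct (ivt0 h y y2) as [z2 [[Z2 Z2'] E2]]; auto.
{ intros x Hx; apply Hc; apply (Hconv y x y2); auto. }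
assert (P z1) by (apply (Hconv y1 z1 y); auto; lra).
assert (P z2) by (apply (Hconv y z2 y2); auto; lra).
apply Hu in E1; auto. apply Hu in E2; auto. lra.
Qed.

Lemma deriv0 (h : R -> R) (xp d : R) : 0 < d ->
  (forall y, xp - d < y < xp + d -> h y <= h xp) -> ex_derive h xp ->
  Derive h xp = 0.
Proof.
intros Hd Hle He.
rewrite <- (Derive_Reals h xp (ex_derive_Reals_0 h xp He)).
apply (deriv_maximum h (xp - d) (xp + d)); try lra.
intros; apply Hle; lra.
Qed.

Lemma sh_pos f : strongly_hyperbolic f -> forall x, 0 < x -> 0 < f x.
Proof. intros H; apply H. Qed.

Lemma sh_cont f : strongly_hyperbolic f -> forall x, 0 < x -> continuous f x.
Proof. intros H x Hx. apply (ex_derive_continuous (K := R_AbsRing) (V := R_NormedModule)). apply H; auto. Qed.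

Lemma sh_big f : strongly_hyperbolic f -> forall M, exists e, 0 < e /\
  forall s, 0 < s < e -> M < f s.
Proof.
intros [_ [H _]] M.
assert (Hl : Rbar_locally p_infty (fun y => M < y)) by (exists M; auto).
specialize (H _ Hl). destruct H as [e He].
exists e; split; [apply cond_pos|].
intros s [Hs1 Hs2]. apply He; auto.
unfold ball; simpl; unfold AbsRing_ball, abs, minus, plus, opp; simpl.
rewrite Rabs_right; lra.
Qed.

Lemma sh_small f : strongly_hyperbolic f -> forall e, 0 < e -> exists N,
  forall t, N < t -> f t < e.
Proof.
intros [_ [_ [H _]]] e He.
apply is_lim_spec in H. destruct (H (mkposreal e He)) as [N HN].
exists N; intros t Ht. specialize (HN t Ht). simpl in HN.
apply Rabs_lt_between in HN. lra.
Qed.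

Lemma sh_ratio f : strongly_hyperbolic f -> forall d r, r < 1 -> exists N,
  forall t, N < t -> 0 < t -> r * f t < f (t + d).
Proof.
intros Hs d r Hr. destruct Hs as [Hp [_ [_ [_ [H _]]]]].
specialize (H d). apply is_lim_spec in H.
assert (He : 0 < 1 - r) by lra.
destruct (H (mkposreal _ He)) as [N HN].
exists N; intros t Ht Ht0. specialize (HN t Ht). simpl in HN.
apply Rabs_lt_between in HN. destruct HN as [HN _].
assert (Hf := Hp t Ht0).
assert (r < f (t + d) / f t) by lra.
apply (Rmult_lt_compat_r (f t)) in H0; auto.
unfold Rdiv in H0. rewrite Rmult_assoc, Rinv_l in H0; lra.
Qed.

Lemma cont_bound (g : R -> R) d : continuous g d -> exists del, 0 < del /\
  forall t, Rabs (t - d) < del -> g t < g d + 1.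
Proof.
intros Hc. apply continuity_pt_filterlim in Hc.
destruct (Hc 1 Rlt_0_1) as [del [Hdel H]].
exists del; split; auto. intros t Ht.
destruct (Req_dec t d) as [->|Hne]; [lra|].
assert (Hx : R_dist (g t) (g d) < 1).
{ apply H. split; [split; [exact I| auto]|]. exact Ht. }
unfold R_dist in Hx. apply Rabs_lt_between in Hx. lra.
Qed.

Lemma sh_surj f : strongly_hyperbolic f -> forall v, 0 < v -> exists t, 0 < t /\ f t = v.
Proof.
intros Hs v Hv.
destruct (sh_big f Hs v) as [e [He Hb]].
destruct (sh_small f Hs v Hv) as [N HN].
set (s0 := e / 2). set (t1 := Rmax N s0 + 1).
assert (Hs0 : 0 < s0 < e) by (unfold s0; lra).
assert (Ht1 : s0 < t1 /\ N < t1) by (unfold t1; split; [pose proof (Rmax_r N s0)|pose proof (Rmax_l N s0)]; lra).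
destruct (ivt0 (fun x => f x - v) s0 t1) as [z [Hz Ez]]; [lra| | |].
- intros x Hx. apply (continuous_minus f (fun _ => v)).
  apply sh_cont; auto; lra. apply continuous_const.
- right. specialize (Hb s0 Hs0). specialize (HN t1 (proj2 Ht1)). lra.
- exists z; split; lra.
Qed.

Section FABC.
Variables (f1 f2 : R -> R) (a b c : R).

Lemma fabc_right x : - b < x -> fabc f1 f2 a b c x = a * f1 (x + b) + c.
Proof. intros H; unfold fabc; destruct (Rlt_dec (-b) x); [auto|lra]. Qed.

Lemma fabc_left x : x < - b -> fabc f1 f2 a b c x = - a * f2 (- x - b) + c.
Proof. intros H; unfold fabc; destruct (Rlt_dec (-b) x); [lra|auto]. Qed.

Lemma locally_gt (x y : R) : y < x -> locally x (fun t => y < t).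
Proof.
intros H. assert (He : 0 < x - y) by lra. exists (mkposreal _ He).
intros t Ht. unfold ball in Ht; simpl in Ht; unfold AbsRing_ball, abs, minus, plus, opp in Ht; simpl in Ht.
apply Rabs_lt_between in Ht. lra.
Qed.

Lemma locally_lt (x y : R) : x < y -> locally x (fun t => t < y).
Proof.
intros H. assert (He : 0 < y - x) by lra. exists (mkposreal _ He).
intros t Ht. unfold ball in Ht; simpl in Ht; unfold AbsRing_ball, abs, minus, plus, opp in Ht; simpl in Ht.
apply Rabs_lt_between in Ht. lra.
Qed.

Lemma fabc_ex_derive x : strongly_hyperbolic f1 -> strongly_hyperbolic f2 ->
  x <> - b -> ex_derive (fabc f1 f2 a b c) x.
Proof.
intros H1 H2 Hx. destruct (Rtotal_order x (-b)) as [Hl|[E|Hr]]; [|contradiction|].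
- apply (ex_derive_ext_loc (fun t => - a * f2 (- t - b) + c)).
  + apply (filter_imp (fun t => t < -b)); [|apply locally_lt; auto].
    intros t Ht; rewrite fabc_left; auto.
  + auto_derive; repeat split. destruct H2 as (_&_&_&_&_&Hd&_); apply Hd; lra.
- apply (ex_derive_ext_loc (fun t => a * f1 (t + b) + c)).
  + apply (filter_imp (fun t => -b < t)); [|apply locally_gt; auto].
    intros t Ht; rewrite fabc_right; auto.
  + auto_derive; repeat split. destruct H1 as (_&_&_&_&_&Hd&_); apply Hd; lra.
Qed.

Lemma fabc_cont x : strongly_hyperbolic f1 -> strongly_hyperbolic f2 ->
  x <> - b -> continuous (fabc f1 f2 a b c) x.
Proof.
intros H1 H2 Hx. apply (ex_derive_continuous (K := R_AbsRing) (V := R_NormedModule)).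
apply fabc_ex_derive; auto.
Qed.

Lemma mem_real x y : fabc_bar f1 f2 a b c (Some x, Some y) <-> x <> - b /\ y = fabc f1 f2 a b c x.
Proof.
unfold fabc_bar; split.
- intros [[z [Hz E]]|[E|E]]; try discriminate. injection E; intros; subst; auto.
- intros [H E]; left; exists x; subst; auto.
Qed.

End FABC.

Set Default Proof Using "All".
Section Ends.
Variables (f1 f2 : R -> R) (a1 a2 b1 b2 c1 c2 : R).
Hypotheses (H1 : strongly_hyperbolic f1) (H2 : strongly_hyperbolic f2)
  (Ha1 : 0 < a1) (Ha2 : 0 < a2) (Hb : - b1 < - b2).

Let h x := fabc f1 f2 a1 b1 c1 x - fabc f1 f2 a2 b2 c2 x.

Lemma E1 : c1 <> c2 -> forall M, exists x, x < M /\ x < - b1 /\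
  (c1 < c2 -> h x < 0) /\ (c2 < c1 -> 0 < h x).
Proof.
intros Hc M.
assert (Hac : 0 < Rabs (c1 - c2)) by (apply Rabs_pos_lt; lra).
set (e := Rabs (c1 - c2) / (2 * (a1 + a2))).
assert (He : 0 < e) by (unfold e; apply Rdiv_lt_0_compat; lra).
assert (Hae : a1 * e + a2 * e = Rabs (c1 - c2) / 2) by (unfold e; field; lra).
destruct (sh_small f2 H2 e He) as [N HN].
set (x := Rmin M (- b1 - Rabs N) - 1).
assert (Hx1 : x < M) by (unfold x; pose proof (Rmin_l M (- b1 - Rabs N)); lra).
assert (Hx2 : x < - b1 - Rabs N) by (unfold x; pose proof (Rmin_r M (- b1 - Rabs N)); lra).
pose proof (Rle_abs N). pose proof (Rabs_pos N).
exists x. split; auto. split; [lra|].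
unfold h. rewrite fabc_left by lra. rewrite fabc_left by lra.
assert (P1 := sh_pos f2 H2 (- x - b1) ltac:(lra)).
assert (P2 := sh_pos f2 H2 (- x - b2) ltac:(lra)).
assert (Q1 := HN (- x - b1) ltac:(lra)).
assert (Q2 := HN (- x - b2) ltac:(lra)).
assert (R1 : a1 * f2 (- x - b1) < a1 * e) by (apply Rmult_lt_compat_l; lra).
assert (R2 : a2 * f2 (- x - b2) < a2 * e) by (apply Rmult_lt_compat_l; lra).
assert (R3 : 0 < a1 * f2 (- x - b1)) by (apply Rmult_lt_0_compat; lra).
assert (R4 : 0 < a2 * f2 (- x - b2)) by (apply Rmult_lt_0_compat; lra).
split; intros Hcc.
- rewrite Rabs_left in Hae by lra. lra.
- rewrite Rabs_right in Hae by lra. lra.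
Qed.

Lemma E2 : forall x0, x0 < - b1 -> exists x, x0 < x < - b1 /\ h x < 0.
Proof.
intros x0 Hx0.
set (d := b1 - b2).
destruct (cont_bound f2 d (sh_cont f2 H2 d ltac:(unfold d; lra))) as [del [Hdel Hcb]].
set (K := c1 - c2 + a2 * (f2 d + 1)).
destruct (sh_big f2 H2 (Rabs K / a1)) as [eps [Heps Hbig]].
set (s := Rmin (Rmin eps del) (- b1 - x0) / 2).
assert (Hs : 0 < s /\ s < eps /\ s < del /\ s < - b1 - x0).
{ unfold s. pose proof (Rmin_l (Rmin eps del) (- b1 - x0)).
  pose proof (Rmin_r (Rmin eps del) (- b1 - x0)).
  pose proof (Rmin_l eps del). pose proof (Rmin_r eps del).
  assert (0 < Rmin (Rmin eps del) (- b1 - x0)) by (repeat apply Rmin_glb_lt; lra).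
  lra. }
exists (- b1 - s). split; [lra|].
unfold h. rewrite fabc_left by lra. rewrite fabc_left by (unfold d in *; lra).
replace (- (- b1 - s) - b1) with s by ring.
replace (- (- b1 - s) - b2) with (s + d) by (unfold d; ring).
assert (Q1 := Hbig s ltac:(lra)).
assert (Q2 := Hcb (s + d) ltac:(replace (s + d - d) with s by ring; rewrite Rabs_right; lra)).
assert (R1 : a1 * (Rabs K / a1) < a1 * f2 s) by (apply Rmult_lt_compat_l; lra).
replace (a1 * (Rabs K / a1)) with (Rabs K) in R1 by (field; lra).
assert (R2 : a2 * f2 (s + d) < a2 * (f2 d + 1)) by (apply Rmult_lt_compat_l; lra).
pose proof (Rle_abs K). unfold K in *. lra.
Qed.

Lemma E3 : forall x0, - b1 < x0 -> exists x, - b1 < x < x0 /\ x < - b2 /\ 0 < h x.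
Proof.
intros x0 Hx0.
destruct (sh_big f1 H1 (Rabs (c1 - c2) / a1)) as [eps [Heps Hbig]].
set (s := Rmin eps (Rmin (x0 + b1) (b1 - b2)) / 2).
assert (Hs : 0 < s /\ s < eps /\ s < x0 + b1 /\ s < b1 - b2).
{ unfold s. pose proof (Rmin_l eps (Rmin (x0 + b1) (b1 - b2))).
  pose proof (Rmin_r eps (Rmin (x0 + b1) (b1 - b2))).
  pose proof (Rmin_l (x0 + b1) (b1 - b2)). pose proof (Rmin_r (x0 + b1) (b1 - b2)).
  assert (0 < Rmin eps (Rmin (x0 + b1) (b1 - b2))) by (repeat apply Rmin_glb_lt; lra).
  lra. }
exists (- b1 + s). split; [lra|]. split; [lra|].
unfold h. rewrite fabc_right by lra. rewrite fabc_left by lra.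
replace (- b1 + s + b1) with s by ring.
assert (Q1 := Hbig s ltac:(lra)).
assert (P2 := sh_pos f2 H2 (- (- b1 + s) - b2) ltac:(lra)).
assert (R1 : a1 * (Rabs (c1 - c2) / a1) < a1 * f1 s) by (apply Rmult_lt_compat_l; lra).
replace (a1 * (Rabs (c1 - c2) / a1)) with (Rabs (c1 - c2)) in R1 by (field; lra).
assert (R2 : 0 < a2 * f2 (- (- b1 + s) - b2)) by (apply Rmult_lt_0_compat; lra).
pose proof (Rle_abs (c1 - c2)). pose proof (Rabs_Ropp (c1 - c2)).
pose proof (Rle_abs (- (c1 - c2))). lra.
Qed.

Lemma E4 : forall x0, x0 < - b2 -> exists x, x0 < x < - b2 /\ - b1 < x /\ 0 < h x.
Proof.
intros x0 Hx0.
destruct (sh_big f2 H2 (Rabs (c1 - c2) / a2)) as [eps [Heps Hbig]].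
set (s := Rmin eps (Rmin (- b2 - x0) (b1 - b2)) / 2).
assert (Hs : 0 < s /\ s < eps /\ s < - b2 - x0 /\ s < b1 - b2).
{ unfold s. pose proof (Rmin_l eps (Rmin (- b2 - x0) (b1 - b2))).
  pose proof (Rmin_r eps (Rmin (- b2 - x0) (b1 - b2))).
  pose proof (Rmin_l (- b2 - x0) (b1 - b2)). pose proof (Rmin_r (- b2 - x0) (b1 - b2)).
  assert (0 < Rmin eps (Rmin (- b2 - x0) (b1 - b2))) by (repeat apply Rmin_glb_lt; lra).
  lra. }
exists (- b2 - s). split; [lra|]. split; [lra|].
unfold h. rewrite fabc_right by lra. rewrite fabc_left by lra.
replace (- (- b2 - s) - b2) with s by ring.
assert (Q1 := Hbig s ltac:(lra)).
assert (P2 := sh_pos f1 H1 (- b2 - s + b1) ltac:(lra)).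
assert (R1 : a2 * (Rabs (c1 - c2) / a2) < a2 * f2 s) by (apply Rmult_lt_compat_l; lra).
replace (a2 * (Rabs (c1 - c2) / a2)) with (Rabs (c1 - c2)) in R1 by (field; lra).
assert (R2 : 0 < a1 * f1 (- b2 - s + b1)) by (apply Rmult_lt_0_compat; lra).
pose proof (Rle_abs (c1 - c2)). pose proof (Rabs_Ropp (c1 - c2)).
pose proof (Rle_abs (- (c1 - c2))). lra.
Qed.

Lemma E5 : forall x0, - b2 < x0 -> exists x, - b2 < x < x0 /\ h x < 0.
Proof.
intros x0 Hx0.
set (d := b1 - b2).
destruct (cont_bound f1 d (sh_cont f1 H1 d ltac:(unfold d; lra))) as [del [Hdel Hcb]].
set (K := c1 - c2 + a1 * (f1 d + 1)).
destruct (sh_big f1 H1 (Rabs K / a2)) as [eps [Heps Hbig]].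
set (s := Rmin (Rmin eps del) (x0 + b2) / 2).
assert (Hs : 0 < s /\ s < eps /\ s < del /\ s < x0 + b2).
{ unfold s. pose proof (Rmin_l (Rmin eps del) (x0 + b2)).
  pose proof (Rmin_r (Rmin eps del) (x0 + b2)).
  pose proof (Rmin_l eps del). pose proof (Rmin_r eps del).
  assert (0 < Rmin (Rmin eps del) (x0 + b2)) by (repeat apply Rmin_glb_lt; lra).
  lra. }
exists (- b2 + s). split; [lra|].
unfold h. rewrite fabc_right by (unfold d in *; lra). rewrite fabc_right by lra.
replace (- b2 + s + b2) with s by ring.
replace (- b2 + s + b1) with (s + d) by (unfold d; ring).
assert (Q1 := Hbig s ltac:(lra)).
assert (Q2 := Hcb (s + d) ltac:(replace (s + d - d) with s by ring; rewrite Rabs_right; lra)).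
assert (R1 : a2 * (Rabs K / a2) < a2 * f1 s) by (apply Rmult_lt_compat_l; lra).
replace (a2 * (Rabs K / a2)) with (Rabs K) in R1 by (field; lra).
assert (R2 : a1 * f1 (s + d) < a1 * (f1 d + 1)) by (apply Rmult_lt_compat_l; lra).
pose proof (Rle_abs K). unfold K in *. lra.
Qed.

Lemma E6 : c1 <> c2 -> forall M, exists x, M < x /\ - b2 < x /\
  (c1 < c2 -> h x < 0) /\ (c2 < c1 -> 0 < h x).
Proof.
intros Hc M.
assert (Hac : 0 < Rabs (c1 - c2)) by (apply Rabs_pos_lt; lra).
set (e := Rabs (c1 - c2) / (2 * (a1 + a2))).
assert (He : 0 < e) by (unfold e; apply Rdiv_lt_0_compat; lra).
assert (Hae : a1 * e + a2 * e = Rabs (c1 - c2) / 2) by (unfold e; field; lra).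
destruct (sh_small f1 H1 e He) as [N HN].
set (x := Rmax M (- b2 + Rabs N) + 1).
assert (Hx1 : M < x) by (unfold x; pose proof (Rmax_l M (- b2 + Rabs N)); lra).
assert (Hx2 : - b2 + Rabs N < x) by (unfold x; pose proof (Rmax_r M (- b2 + Rabs N)); lra).
pose proof (Rle_abs N). pose proof (Rabs_pos N).
exists x. split; auto. split; [lra|].
unfold h. rewrite fabc_right by lra. rewrite fabc_right by lra.
assert (P1 := sh_pos f1 H1 (x + b1) ltac:(lra)).
assert (P2 := sh_pos f1 H1 (x + b2) ltac:(lra)).
assert (Q1 := HN (x + b1) ltac:(lra)).
assert (Q2 := HN (x + b2) ltac:(lra)).
assert (R1 : a1 * f1 (x + b1) < a1 * e) by (apply Rmult_lt_compat_l; lra).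
assert (R2 : a2 * f1 (x + b2) < a2 * e) by (apply Rmult_lt_compat_l; lra).
assert (R3 : 0 < a1 * f1 (x + b1)) by (apply Rmult_lt_0_compat; lra).
assert (R4 : 0 < a2 * f1 (x + b2)) by (apply Rmult_lt_0_compat; lra).
split; intros Hcc.
- rewrite Rabs_left in Hae by lra. lra.
- rewrite Rabs_right in Hae by lra. lra.
Qed.

Lemma E7 : a2 < a1 -> forall M, exists x, M < x /\ - b2 < x /\ c1 - c2 < h x.
Proof.
intros Ha M. set (d := b1 - b2).
destruct (sh_ratio f1 H1 d (a2 / a1)) as [N HN].
{ apply (Rmult_lt_reg_l a1); auto. field_simplify; lra. }
set (x := Rmax M (Rmax (- b2) (N - b2)) + 1).
pose proof (Rmax_l M (Rmax (- b2) (N - b2))). pose proof (Rmax_r M (Rmax (- b2) (N - b2))).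
pose proof (Rmax_l (- b2) (N - b2)). pose proof (Rmax_r (- b2) (N - b2)).
exists x. split; [unfold x; lra|]. split; [unfold x; lra|].
unfold h. rewrite fabc_right by (unfold x, d in *; lra). rewrite fabc_right by (unfold x; lra).
assert (Q := HN (x + b2) ltac:(unfold x; lra) ltac:(unfold x; lra)).
replace (x + b2 + d) with (x + b1) in Q by (unfold d; ring).
apply (Rmult_lt_compat_l a1) in Q; auto.
replace (a1 * (a2 / a1 * f1 (x + b2))) with (a2 * f1 (x + b2)) in Q by (field; lra).
lra.
Qed.

Lemma E8 : a1 < a2 -> forall M, exists x, x < M /\ x < - b1 /\ c1 - c2 < h x.
Proof.
intros Ha M. set (d := b1 - b2).
destruct (sh_ratio f2 H2 d (a1 / a2)) as [N HN].
{ apply (Rmult_lt_reg_l a2); auto. field_simplify; lra. }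
set (x := Rmin M (Rmin (- b1) (- b1 - N)) - 1).
pose proof (Rmin_l M (Rmin (- b1) (- b1 - N))). pose proof (Rmin_r M (Rmin (- b1) (- b1 - N))).
pose proof (Rmin_l (- b1) (- b1 - N)). pose proof (Rmin_r (- b1) (- b1 - N)).
exists x. split; [unfold x; lra|]. split; [unfold x; lra|].
unfold h. rewrite fabc_left by (unfold x in *; lra). rewrite fabc_left by (unfold x, d in *; lra).
assert (Q := HN (- x - b1) ltac:(unfold x; lra) ltac:(unfold x; lra)).
replace (- x - b1 + d) with (- x - b2) in Q by (unfold d; ring).
apply (Rmult_lt_compat_l a2) in Q; auto.
replace (a2 * (a1 / a2 * f2 (- x - b1))) with (a1 * f2 (- x - b1)) in Q by (field; lra).
lra.
Qed.

End Ends.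

Lemma hcont f1 f2 a1 a2 b1 b2 c1 c2 x :
  strongly_hyperbolic f1 -> strongly_hyperbolic f2 -> x <> - b1 -> x <> - b2 ->
  continuous (fun x => fabc f1 f2 a1 b1 c1 x - fabc f1 f2 a2 b2 c2 x) x.
Proof.
intros H1 H2 N1 N2.
apply (continuous_minus (fabc f1 f2 a1 b1 c1) (fabc f1 f2 a2 b2 c2));
apply fabc_cont; auto.
Qed.

Lemma hder f1 f2 a1 a2 b1 b2 c1 c2 x :
  strongly_hyperbolic f1 -> strongly_hyperbolic f2 -> x <> - b1 -> x <> - b2 ->
  ex_derive (fun x => fabc f1 f2 a1 b1 c1 x - fabc f1 f2 a2 b2 c2 x) x /\
  Derive (fun x => fabc f1 f2 a1 b1 c1 x - fabc f1 f2 a2 b2 c2 x) x =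
  Derive (fabc f1 f2 a1 b1 c1) x - Derive (fabc f1 f2 a2 b2 c2) x.
Proof.
intros H1 H2 N1 N2. split.
- apply (ex_derive_minus (fabc f1 f2 a1 b1 c1) (fabc f1 f2 a2 b2 c2));
  apply fabc_ex_derive; auto.
- apply Derive_minus; apply fabc_ex_derive; auto.
Qed.

Lemma part1_aux f1 f2 a1 a2 b c1 c2 :
  strongly_hyperbolic f1 -> strongly_hyperbolic f2 -> 0 < a1 -> 0 < a2 ->
  a2 < a1 -> c1 <> c2 ->
  exists x, x <> - b /\ fabc f1 f2 a1 b c1 x = fabc f1 f2 a2 b c2 x.
Proof.
intros H1 H2 Ha1 Ha2 Ha Hc.
destruct (Rtotal_order c1 c2) as [Hlt|[E|Hgt]]; [|contradiction|].
- destruct (sh_surj f1 H1 ((c2 - c1) / (a1 - a2))) as [t [Ht Et]].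
  { apply Rdiv_lt_0_compat; lra. }
  exists (t - b). split; [lra|].
  rewrite !fabc_right by lra. replace (t - b + b) with t by ring. rewrite Et.
  field; lra.
- destruct (sh_surj f2 H2 ((c1 - c2) / (a1 - a2))) as [t [Ht Et]].
  { apply Rdiv_lt_0_compat; lra. }
  exists (- t - b). split; [lra|].
  rewrite !fabc_left by lra. replace (- (- t - b) - b) with t by ring. rewrite Et.
  field; lra.
Qed.

Lemma part2_aux f1 f2 a1 a2 b1 b2 c :
  strongly_hyperbolic f1 -> strongly_hyperbolic f2 -> 0 < a1 -> 0 < a2 ->
  - b1 < - b2 -> a1 <> a2 ->
  exists x, x <> - b1 /\ x <> - b2 /\ fabc f1 f2 a1 b1 c x = fabc f1 f2 a2 b2 c x.
Proof.
intros H1 H2 Ha1 Ha2 Hb Ha.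
destruct (Rtotal_order a1 a2) as [Hlt|[E|Hgt]]; [|contradiction|].
- destruct (E8 f1 f2 a1 a2 b1 b2 c c H1 H2 Ha1 Ha2 Hb Hlt (- b1)) as [x1 [_ [X1 Q1]]].
  destruct (E2 f1 f2 a1 a2 b1 b2 c c H1 H2 Ha1 Ha2 Hb x1 X1) as [x2 [X2 Q2]].
  destruct (ivt0 (fun x => fabc f1 f2 a1 b1 c x - fabc f1 f2 a2 b2 c x) x1 x2) as [z [Z EZ]].
  + lra.
  + intros x Hx; apply hcont; auto; lra.
  + right; lra.
  + exists z; split; [lra|split; [lra|]]. simpl in EZ; lra.
- destruct (E5 f1 f2 a1 a2 b1 b2 c c H1 H2 Ha1 Ha2 Hb (- b2 + 1) ltac:(lra)) as [x1 [X1 Q1]].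
  destruct (E7 f1 f2 a1 a2 b1 b2 c c H1 H2 Ha1 Ha2 Hb Hgt x1) as [x2 [X2 [_ Q2]]].
  destruct (ivt0 (fun x => fabc f1 f2 a1 b1 c x - fabc f1 f2 a2 b2 c x) x1 x2) as [z [Z EZ]].
  + lra.
  + intros x Hx; apply hcont; auto; lra.
  + left; lra.
  + exists z; split; [lra|split; [lra|]]. simpl in EZ; lra.
Qed.

Lemma part3_aux f1 f2 a1 a2 b1 b2 c1 c2 xp :
  strongly_hyperbolic f1 -> strongly_hyperbolic f2 -> 0 < a1 -> 0 < a2 ->
  - b1 < - b2 -> c1 <> c2 -> xp <> - b1 -> xp <> - b2 ->
  fabc f1 f2 a1 b1 c1 xp = fabc f1 f2 a2 b2 c2 xp ->
  (forall x, x <> - b1 -> x <> - b2 -> fabc f1 f2 a1 b1 c1 x = fabc f1 f2 a2 b2 c2 x -> x = xp) ->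
  Derive (fabc f1 f2 a1 b1 c1) xp = Derive (fabc f1 f2 a2 b2 c2) xp.
Proof.
intros H1 H2 Ha1 Ha2 Hb Hc N1 N2 Exp Hu.
set (h := fun x => fabc f1 f2 a1 b1 c1 x - fabc f1 f2 a2 b2 c2 x).
destruct (hder f1 f2 a1 a2 b1 b2 c1 c2 xp H1 H2 N1 N2) as [Hed HD].
destruct (Rtotal_order c1 c2) as [Hlt|[E|Hgt]]; [|contradiction|].
2:{ exfalso.
  destruct (E1 f1 f2 a1 a2 b1 b2 c1 c2 H1 H2 Ha1 Ha2 Hb Hc (- b1)) as [x1 [_ [X1 [_ Q1]]]].
  specialize (Q1 Hgt).
  destruct (E2 f1 f2 a1 a2 b1 b2 c1 c2 H1 H2 Ha1 Ha2 Hb x1 X1) as [x2 [X2 Q2]].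
  destruct (ivt0 h x1 x2) as [z1 [Z1 EZ1]]; [lra| |right; unfold h; lra|].
  { intros x Hx; apply hcont; auto; lra. }
  destruct (E5 f1 f2 a1 a2 b1 b2 c1 c2 H1 H2 Ha1 Ha2 Hb (- b2 + 1) ltac:(lra)) as [x3 [X3 Q3]].
  destruct (E6 f1 f2 a1 a2 b1 b2 c1 c2 H1 H2 Ha1 Ha2 Hb Hc x3) as [x4 [X4 [_ [_ Q4]]]].
  specialize (Q4 Hgt).
  destruct (ivt0 h x3 x4) as [z2 [Z2 EZ2]]; [lra| |left; unfold h; lra|].
  { intros x Hx; apply hcont; auto; lra. }
  unfold h in EZ1, EZ2.
  assert (z1 = xp) by (apply Hu; lra).
  assert (z2 = xp) by (apply Hu; lra).
  lra. }
destruct (Rtotal_order xp (- b1)) as [XI|[XE|XJK]]; [|contradiction|].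
-
  assert (Hle : forall y, y < - b1 -> h y <= 0).
  { apply (sign_const h (fun y => y < - b1) xp).
    - intros; lra.
    - intros x Hx; apply hcont; auto; lra.
    - intros y Hy.
      destruct (E1 f1 f2 a1 a2 b1 b2 c1 c2 H1 H2 Ha1 Ha2 Hb Hc y) as [y1 [Y1 [Y1' [Q1 _]]]].
      destruct (E2 f1 f2 a1 a2 b1 b2 c1 c2 H1 H2 Ha1 Ha2 Hb y Hy) as [y2 [Y2 Q2]].
      exists y1, y2. unfold h; repeat split; auto; lra.
    - intros x Hx Ex. apply Hu; unfold h in Ex; lra. }
  assert (Dh : Derive h xp = 0).
  { apply (deriv0 h xp (- b1 - xp)); [lra| |exact Hed].
    intros y Hy. replace (h xp) with 0 by (unfold h; lra). apply Hle; lra. }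
  unfold h in Dh; lra.
- destruct (Rtotal_order xp (- b2)) as [XJ|[XE|XK]]; [|contradiction|].
  +
    set (h' := fun x => fabc f1 f2 a2 b2 c2 x - fabc f1 f2 a1 b1 c1 x).
    assert (Hle : forall y, - b1 < y < - b2 -> h' y <= 0).
    { apply (sign_const h' (fun y => - b1 < y < - b2) xp).
      - intros; lra.
      - intros x Hx; apply hcont; auto; lra.
      - intros y Hy.
        destruct (E3 f1 f2 a1 a2 b1 b2 c1 c2 H1 H2 Ha1 Ha2 Hb y (proj1 Hy)) as [y1 [Y1 [Y1' Q1]]].
        destruct (E4 f1 f2 a1 a2 b1 b2 c1 c2 H1 H2 Ha1 Ha2 Hb y (proj2 Hy)) as [y2 [Y2 [Y2' Q2]]].
        exists y1, y2. unfold h'; repeat split; auto; lra.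
      - intros x Hx Ex. apply Hu; unfold h' in Ex; lra. }
    destruct (hder f1 f2 a2 a1 b2 b1 c2 c1 xp H1 H2 N2 N1) as [Hed' HD'].
    assert (Dh : Derive h' xp = 0).
    { apply (deriv0 h' xp (Rmin (xp + b1) (- b2 - xp))); [apply Rmin_glb_lt; lra| |exact Hed'].
      intros y Hy. pose proof (Rmin_l (xp + b1) (- b2 - xp)). pose proof (Rmin_r (xp + b1) (- b2 - xp)).
      replace (h' xp) with 0 by (unfold h'; lra). apply Hle; lra. }
    unfold h' in Dh; lra.
  +
    assert (Hle : forall y, - b2 < y -> h y <= 0).
    { apply (sign_const h (fun y => - b2 < y) xp).
      - intros; lra.
      - intros x Hx; apply hcont; auto; lra.
      - intros y Hy.
        destruct (E5 f1 f2 a1 a2 b1 b2 c1 c2 H1 H2 Ha1 Ha2 Hb y Hy) as [y1 [Y1 Q1]].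
        destruct (E6 f1 f2 a1 a2 b1 b2 c1 c2 H1 H2 Ha1 Ha2 Hb Hc y) as [y2 [Y2 [Y2' [Q2 _]]]].
        exists y1, y2. unfold h; repeat split; auto; lra.
      - intros x Hx Ex. apply Hu; unfold h in Ex; lra. }
    assert (Dh : Derive h xp = 0).
    { apply (deriv0 h xp (xp + b2)); [lra| |exact Hed].
      intros y Hy. replace (h xp) with 0 by (unfold h; lra). apply Hle; lra. }
    unfold h in Dh; lra.
Qed.

Theorem lemma4p15 (f1 f2 : R -> R) (a1 a2 b1 b2 c1 c2 : R) (p : P) :
  strongly_hyperbolic f1 -> strongly_hyperbolic f2 ->
  0 < a1 -> 0 < a2 ->
  ~ (forall q : P, fabc_bar f1 f2 a1 b1 c1 q <-> fabc_bar f1 f2 a2 b2 c2 q) ->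
  (forall q : P, (fabc_bar f1 f2 a1 b1 c1 q /\ fabc_bar f1 f2 a2 b2 c2 q) <-> q = p) ->
  (forall b : R, p = (Some b, None) ->
     a1 = a2 /\ b1 = - b /\ b2 = - b /\ c1 <> c2) /\
  (forall c : R, p = (None, Some c) ->
     a1 = a2 /\ b1 <> b2 /\ c1 = c /\ c2 = c) /\
  (forall xp yp : R, p = (Some xp, Some yp) ->
     Derive (fabc f1 f2 a1 b1 c1) xp = Derive (fabc f1 f2 a2 b2 c2) xp).
Proof.
intros H1 H2 Ha1 Ha2 _ Hu.
destruct (proj2 (Hu p) eq_refl) as [Hp1 Hp2].
assert (Both : forall q, fabc_bar f1 f2 a1 b1 c1 q -> fabc_bar f1 f2 a2 b2 c2 q -> q = p)
  by (intros q A B; apply Hu; auto).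
assert (Cinf : c1 = c2 -> (None, Some c1) = p).
{ intros E; apply Both; unfold fabc_bar; right; right; subst; auto. }
assert (Binf : b1 = b2 -> (Some (- b1), None) = p).
{ intros E; apply Both; unfold fabc_bar; right; left; subst; auto. }
assert (Real : forall x, x <> - b1 -> x <> - b2 ->
  fabc f1 f2 a1 b1 c1 x = fabc f1 f2 a2 b2 c2 x -> (Some x, Some (fabc f1 f2 a1 b1 c1 x)) = p).
{ intros x X1 X2 E; apply Both; apply mem_real; auto. }
split; [|split].
- intros b ->.
  assert (B1 : b1 = - b).
  { destruct Hp1 as [[x [_ E]]|[E|E]]; try discriminate. injection E; intros; lra. }
  assert (B2 : b2 = - b).
  { destruct Hp2 as [[x [_ E]]|[E|E]]; try discriminate. injection E; intros; lra. }
  assert (Hc : c1 <> c2) by (intros E; specialize (Cinf E); discriminate).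
  split; [|repeat split; auto].
  subst b1 b2.
  destruct (Rtotal_order a1 a2) as [Hlt|[E|Hgt]]; auto; exfalso.
  + destruct (part1_aux f1 f2 a2 a1 (- b) c2 c1 H1 H2 Ha2 Ha1 Hlt (not_eq_sym Hc)) as [x [X E]].
    specialize (Real x X X (eq_sym E)). discriminate.
  + destruct (part1_aux f1 f2 a1 a2 (- b) c1 c2 H1 H2 Ha1 Ha2 Hgt Hc) as [x [X E]].
    specialize (Real x X X E). discriminate.
- intros c ->.
  assert (C1 : c1 = c).
  { destruct Hp1 as [[x [_ E]]|[E|E]]; try discriminate. injection E; auto. }
  assert (C2 : c2 = c).
  { destruct Hp2 as [[x [_ E]]|[E|E]]; try discriminate. injection E; auto. }
  assert (Hb : b1 <> b2) by (intros E; specialize (Binf E); discriminate).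
  split; [|repeat split; auto].
  subst c1 c2.
  destruct (Req_dec a1 a2) as [|Ha]; auto; exfalso.
  destruct (Rtotal_order (- b1) (- b2)) as [Hlt|[E|Hgt]].
  + destruct (part2_aux f1 f2 a1 a2 b1 b2 c H1 H2 Ha1 Ha2 Hlt Ha) as [x [X1 [X2 E]]].
    specialize (Real x X1 X2 E). discriminate.
  + apply Hb; lra.
  + destruct (part2_aux f1 f2 a2 a1 b2 b1 c H1 H2 Ha2 Ha1 Hgt (not_eq_sym Ha)) as [x [X1 [X2 E]]].
    specialize (Real x X2 X1 (eq_sym E)). discriminate.
- intros xp yp ->.
  apply mem_real in Hp1. apply mem_real in Hp2.
  destruct Hp1 as [N1 Y1]. destruct Hp2 as [N2 Y2].
  assert (Hc : c1 <> c2) by (intros E; specialize (Cinf E); discriminate).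
  assert (Hb : b1 <> b2) by (intros E; specialize (Binf E); discriminate).
  assert (Hu' : forall x, x <> - b1 -> x <> - b2 ->
     fabc f1 f2 a1 b1 c1 x = fabc f1 f2 a2 b2 c2 x -> x = xp).
  { intros x X1 X2 E. specialize (Real x X1 X2 E). injection Real; auto. }
  destruct (Rtotal_order (- b1) (- b2)) as [Hlt|[E|Hgt]].
  + apply (part3_aux f1 f2 a1 a2 b1 b2 c1 c2 xp); auto. congruence.
  + exfalso; apply Hb; lra.
  + symmetry. apply (part3_aux f1 f2 a2 a1 b2 b1 c2 c1 xp); auto. congruence.
Qed.
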